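(* Let $f=(f_1,f_2):\mathbb{R}^2\to\mathbb{R}^2$ be a smooth one-generic mapping having a cusp point at the origin with $f(\mathbf{0})=\mathbf{0}$, and assume $\operatorname{rank}Df(\mathbf{0})=1$, $dJ(\mathbf{0})\ne0$ and $F(\mathbf{0})=\mathbf{0}$. Then there exist rotations $L(x,y)=(ax-by,bx+ay)$, $R(x,y)=(cx-dy,dx+cy)$ ($a^2+b^2=c^2+d^2=1$) such that $g=(g_1,g_2)=L\circ f\circ R$, with $J'=\det Dg$, satisfies $$\frac{\partial g_1}{\partial x}(\mathbf{0})=\frac{\partial g_2}{\partial x}(\mathbf{0})=\frac{\partial g_2}{\partial y}(\mathbf{0})=0,\quad \frac{\partial g_1}{\partial y}(\mathbf{0})\ne0,\quad \frac{\partial J'}{\partial x}(\mathbf{0})=0,\quad \frac{\partial J'}{\partial y}(\mathbf{0})\ne0.$$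
   Context: $J=\det Df$ and $F=Df\cdot(-\partial J/\partial y,\ \partial J/\partial x)^T$. $f$ is one-generic if $dJ\ne0$ on $J^{-1}(0)$ (equivalently, $j^1f$ is transverse to the corank strata). A point $p\in S_1(f)=J^{-1}(0)$ with $T_pS_1(f)=\ker Df(p)$ is a cusp point if it is a simple zero of $dJ(\xi)$ on $S_1(f)$, $\xi$ a nonvanishing vector field along $S_1(f)$ in $\ker Df$. *)

(* Defs.v *)
From Stdlib Require Import Reals.
From Coquelicot Require Import Coquelicot.
Open Scope R_scope.

Definition dx (h : R -> R -> R) (x y : R) : R := Derive (fun t => h t y) x.
Definition dy (h : R -> R -> R) (x y : R) : R := Derive (fun t => h x t) y.

Fixpoint Ck2 (k : nat) (h : R -> R -> R) : Prop :=
  (forall x y, continuous (fun p : R * R => h (fst p) (snd p)) (x, y)) /\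
  match k with
  | O => True
  | S m => (forall x y, ex_derive (fun t => h t y) x /\ ex_derive (fun t => h x t) y)
           /\ Ck2 m (dx h) /\ Ck2 m (dy h)
  end.

Definition smooth2 (h : R -> R -> R) : Prop := forall k, Ck2 k h.

Definition smooth1_on (eps : R) (g : R -> R) : Prop :=
  forall (n : nat) (t : R), Rabs t < eps -> ex_derive_n g n t.

Definition Jac (f1 f2 : R -> R -> R) (x y : R) : R :=
  dx f1 x y * dy f2 x y - dy f1 x y * dx f2 x y.

Definition F1 (f1 f2 : R -> R -> R) (x y : R) : R :=
  dx f1 x y * (- dy (Jac f1 f2) x y) + dy f1 x y * dx (Jac f1 f2) x y.
Definition F2 (f1 f2 : R -> R -> R) (x y : R) : R :=
  dx f2 x y * (- dy (Jac f1 f2) x y) + dy f2 x y * dx (Jac f1 f2) x y.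

Definition dJ_nonzero (f1 f2 : R -> R -> R) (x y : R) : Prop :=
  dx (Jac f1 f2) x y <> 0 \/ dy (Jac f1 f2) x y <> 0.

Definition one_generic (f1 f2 : R -> R -> R) : Prop :=
  forall x y, Jac f1 f2 x y = 0 -> dJ_nonzero f1 f2 x y.

Definition rank2 (a b c d : R) : nat :=
  if Req_EM_T a 0 then
    if Req_EM_T b 0 then
      if Req_EM_T c 0 then
        if Req_EM_T d 0 then 0%nat else 1%nat
      else 1%nat
    else 1%nat
  else 1%nat.
Definition rank2x2 (a b c d : R) : nat :=
  if Req_EM_T (a * d - b * c) 0 then rank2 a b c d else 2%nat.

Definition rankDf (f1 f2 : R -> R -> R) (x y : R) : nat :=
  rank2x2 (dx f1 x y) (dy f1 x y) (dx f2 x y) (dy f2 x y).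

(* Cusp point p = (x0, y0) of f:
   p in S_1(f) = J^{-1}(0); near p, S_1(f) is parametrized by a regular smooth
   curve gamma with gamma(0) = p; T_p S_1(f) = span gamma'(0) equals ker Df(p);
   xi is a smooth nonvanishing vector field along S_1(f) with xi in ker Df;
   and t |-> dJ(gamma t)(xi t) has a simple zero at t = 0. *)
Definition cusp_point (f1 f2 : R -> R -> R) (x0 y0 : R) : Prop :=
  Jac f1 f2 x0 y0 = 0 /\
  exists (eps : R) (g1 g2 xi1 xi2 : R -> R),
    0 < eps /\
    smooth1_on eps g1 /\ smooth1_on eps g2 /\
    smooth1_on eps xi1 /\ smooth1_on eps xi2 /\
    g1 0 = x0 /\ g2 0 = y0 /\
    (Derive g1 0 <> 0 \/ Derive g2 0 <> 0) /\
    (forall t, Rabs t < eps ->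
       Jac f1 f2 (g1 t) (g2 t) = 0 /\
       (xi1 t <> 0 \/ xi2 t <> 0) /\
       dx f1 (g1 t) (g2 t) * xi1 t + dy f1 (g1 t) (g2 t) * xi2 t = 0 /\
       dx f2 (g1 t) (g2 t) * xi1 t + dy f2 (g1 t) (g2 t) * xi2 t = 0) /\
    (forall v1 v2 : R,
       (dx f1 x0 y0 * v1 + dy f1 x0 y0 * v2 = 0 /\
        dx f2 x0 y0 * v1 + dy f2 x0 y0 * v2 = 0)
       <-> exists s : R, v1 = s * Derive g1 0 /\ v2 = s * Derive g2 0) /\
    (let phi := fun t =>
        dx (Jac f1 f2) (g1 t) (g2 t) * xi1 t + dy (Jac f1 f2) (g1 t) (g2 t) * xi2 t in
     phi 0 = 0 /\ ex_derive phi 0 /\ Derive phi 0 <> 0).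

(* Main.v *)
Require Import Defs.
From Stdlib Require Import Reals Lra.
From Coquelicot Require Import Coquelicot.
Open Scope R_scope.

Lemma diff_lim h : Ck2 1 h -> forall x y, differentiable_pt_lim h x y (dx h x y) (dy h x y).
Proof.
intros [Hc [Hex [[Hcx _] [Hcy _]]]] x y.
apply filterdiff_differentiable_pt_lim.
eapply filterdiff_ext_lin.
apply (is_derive_filterdiff h x y (dx h) (dy h x y)).
- apply filter_forall. intros [u v]. exact (Derive_correct _ _ (proj1 (Hex u v))).
- exact (Derive_correct _ _ (proj2 (Hex x y))).
- apply Hcx.
- intros [u v]. reflexivity.
Qed.

Lemma chain h (H : Ck2 1 h) (phi psi : R -> R) al ga t0 :
  is_derive phi t0 al -> is_derive psi t0 ga ->
  is_derive (fun t => h (phi t) (psi t)) t0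
    (dx h (phi t0) (psi t0) * al + dy h (phi t0) (psi t0) * ga).
Proof.
intros H1 H2. apply is_derive_Reals.
apply derivable_pt_lim_comp_2d. apply diff_lim; auto.
all: apply is_derive_Reals; auto.
Qed.

Section G.
Variables (f1 f2 : R -> R -> R) (a b c d : R).
Hypothesis (H1 : Ck2 1 f1) (H2 : Ck2 1 f2).

Let L1 x y := c * x - d * y.
Let L2 x y := d * x + c * y.

Lemma dx_minus x y :
  dx (fun x y => a * f1 (c * x - d * y) (d * x + c * y) - b * f2 (c * x - d * y) (d * x + c * y)) x y
  = a * (dx f1 (c*x-d*y) (d*x+c*y) * c + dy f1 (c*x-d*y) (d*x+c*y) * d)
    - b * (dx f2 (c*x-d*y) (d*x+c*y) * c + dy f2 (c*x-d*y) (d*x+c*y) * d).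
Proof.
unfold dx. apply is_derive_unique.
apply (is_derive_minus (fun t => a * f1 (c * t - d * y) (d * t + c * y))
   (fun t => b * f2 (c * t - d * y) (d * t + c * y))).
- apply (is_derive_scal (fun t => f1 (c * t - d * y) (d * t + c * y))).
  apply (chain f1 H1 (fun t => c * t - d * y) (fun t => d * t + c * y)); auto_derive; auto; ring.
- apply (is_derive_scal (fun t => f2 (c * t - d * y) (d * t + c * y))).
  apply (chain f2 H2 (fun t => c * t - d * y) (fun t => d * t + c * y)); auto_derive; auto; ring.
Qed.

Lemma dy_minus x y :
  dy (fun x y => a * f1 (c * x - d * y) (d * x + c * y) - b * f2 (c * x - d * y) (d * x + c * y)) x y
  = a * (dx f1 (c*x-d*y) (d*x+c*y) * (-d) + dy f1 (c*x-d*y) (d*x+c*y) * c)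
    - b * (dx f2 (c*x-d*y) (d*x+c*y) * (-d) + dy f2 (c*x-d*y) (d*x+c*y) * c).
Proof.
unfold dy. apply is_derive_unique.
apply (is_derive_minus (fun t => a * f1 (c * x - d * t) (d * x + c * t))
   (fun t => b * f2 (c * x - d * t) (d * x + c * t))).
- apply (is_derive_scal (fun t => f1 (c * x - d * t) (d * x + c * t))).
  apply (chain f1 H1 (fun t => c * x - d * t) (fun t => d * x + c * t)); auto_derive; auto; ring.
- apply (is_derive_scal (fun t => f2 (c * x - d * t) (d * x + c * t))).
  apply (chain f2 H2 (fun t => c * x - d * t) (fun t => d * x + c * t)); auto_derive; auto; ring.
Qed.

Lemma dx_plus x y :
  dx (fun x y => b * f1 (c * x - d * y) (d * x + c * y) + a * f2 (c * x - d * y) (d * x + c * y)) x y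
  = b * (dx f1 (c*x-d*y) (d*x+c*y) * c + dy f1 (c*x-d*y) (d*x+c*y) * d)
    + a * (dx f2 (c*x-d*y) (d*x+c*y) * c + dy f2 (c*x-d*y) (d*x+c*y) * d).
Proof.
unfold dx. apply is_derive_unique.
apply (is_derive_plus (fun t => b * f1 (c * t - d * y) (d * t + c * y))
   (fun t => a * f2 (c * t - d * y) (d * t + c * y))).
- apply (is_derive_scal (fun t => f1 (c * t - d * y) (d * t + c * y))).
  apply (chain f1 H1 (fun t => c * t - d * y) (fun t => d * t + c * y)); auto_derive; auto; ring.
- apply (is_derive_scal (fun t => f2 (c * t - d * y) (d * t + c * y))).
  apply (chain f2 H2 (fun t => c * t - d * y) (fun t => d * t + c * y)); auto_derive; auto; ring.
Qed.

Lemma dy_plus x y :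
  dy (fun x y => b * f1 (c * x - d * y) (d * x + c * y) + a * f2 (c * x - d * y) (d * x + c * y)) x y
  = b * (dx f1 (c*x-d*y) (d*x+c*y) * (-d) + dy f1 (c*x-d*y) (d*x+c*y) * c)
    + a * (dx f2 (c*x-d*y) (d*x+c*y) * (-d) + dy f2 (c*x-d*y) (d*x+c*y) * c).
Proof.
unfold dy. apply is_derive_unique.
apply (is_derive_plus (fun t => b * f1 (c * x - d * t) (d * x + c * t))
   (fun t => a * f2 (c * x - d * t) (d * x + c * t))).
- apply (is_derive_scal (fun t => f1 (c * x - d * t) (d * x + c * t))).
  apply (chain f1 H1 (fun t => c * x - d * t) (fun t => d * x + c * t)); auto_derive; auto; ring.
- apply (is_derive_scal (fun t => f2 (c * x - d * t) (d * x + c * t))).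
  apply (chain f2 H2 (fun t => c * x - d * t) (fun t => d * x + c * t)); auto_derive; auto; ring.
Qed.
End G.

Lemma isd_mult (f g : R -> R) x df dg : is_derive f x df -> is_derive g x dg ->
  is_derive (fun t => f t * g t) x (df * g x + f x * dg).
Proof. intros. apply (is_derive_mult f g x df dg); auto. intros; apply Rmult_comm. Qed.
Lemma isd_minus (f g : R -> R) x df dg : is_derive f x df -> is_derive g x dg ->
  is_derive (fun t => f t - g t) x (df - dg).
Proof. intros. apply (is_derive_minus f g x df dg); auto. Qed.
Lemma isd_eq (f : R -> R) x l l' : is_derive f x l -> l = l' -> is_derive f x l'.
Proof. intros; subst; auto. Qed.

Lemma JC f1 f2 (A : Ck2 1 (dx f1)) (B : Ck2 1 (dy f1)) (C : Ck2 1 (dx f2)) (D : Ck2 1 (dy f2))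
  (phi psi : R -> R) al ga t0 :
  is_derive phi t0 al -> is_derive psi t0 ga ->
  is_derive (fun t => Jac f1 f2 (phi t) (psi t)) t0
   ((dx (dx f1) (phi t0) (psi t0) * al + dy (dx f1) (phi t0) (psi t0) * ga) * dy f2 (phi t0) (psi t0)
    + dx f1 (phi t0) (psi t0) * (dx (dy f2) (phi t0) (psi t0) * al + dy (dy f2) (phi t0) (psi t0) * ga)
    - ((dx (dy f1) (phi t0) (psi t0) * al + dy (dy f1) (phi t0) (psi t0) * ga) * dx f2 (phi t0) (psi t0)
    + dy f1 (phi t0) (psi t0) * (dx (dx f2) (phi t0) (psi t0) * al + dy (dx f2) (phi t0) (psi t0) * ga))).
Proof.
intros Hp Hq. unfold Jac at 1. cbv beta.
apply (isd_minus (fun t => dx f1 (phi t) (psi t) * dy f2 (phi t) (psi t))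
    (fun t => dy f1 (phi t) (psi t) * dx f2 (phi t) (psi t))).
- apply (isd_mult (fun t => dx f1 (phi t) (psi t)) (fun t => dy f2 (phi t) (psi t))).
  + exact (chain _ A phi psi al ga t0 Hp Hq).
  + exact (chain _ D phi psi al ga t0 Hp Hq).
- apply (isd_mult (fun t => dy f1 (phi t) (psi t)) (fun t => dx f2 (phi t) (psi t))).
  + exact (chain _ B phi psi al ga t0 Hp Hq).
  + exact (chain _ C phi psi al ga t0 Hp Hq).
Qed.

Lemma normpos u v : u <> 0 \/ v <> 0 ->
  0 < sqrt (u^2 + v^2) /\ sqrt (u^2+v^2) * sqrt (u^2+v^2) = u^2 + v^2.
Proof.
intros H. assert (Hp : 0 < u^2 + v^2).
{ destruct H as [H|H]; [assert (0 < u^2) by (apply pow2_gt_0; auto) | assert (0 < v^2) by (apply pow2_gt_0; auto)];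
  pose proof (pow2_ge_0 u); pose proof (pow2_ge_0 v); lra. }
split. apply sqrt_lt_R0; auto. apply sqrt_sqrt; lra.
Qed.

Lemma kern p q r s Jx Jy : p*s - q*r = 0 -> ~(p=0/\q=0/\r=0/\s=0) ->
  p*(-Jy)+q*Jx=0 -> r*(-Jy)+s*Jx = 0 ->
  exists c d, c^2+d^2=1 /\ p*c+q*d=0 /\ r*c+s*d=0 /\ c*Jx+d*Jy=0.
Proof.
intros Hd Hnz H1 H2.
destruct (Req_dec p 0) as [Hp|Hp]; [destruct (Req_dec q 0) as [Hq|Hq]|].
- assert (Hrs : r <> 0 \/ s <> 0).
  { destruct (Req_dec r 0); destruct (Req_dec s 0); auto. exfalso; tauto. }
  destruct (normpos r s Hrs) as [Hn Hn2].
  set (n := sqrt (r^2+s^2)) in *. assert (Hn0 : n <> 0) by (intro; lra).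
  exists (-s/n), (r/n). subst p q. repeat split.
  + replace ((-s/n)^2+(r/n)^2) with ((r^2+s^2)/(n*n)) by (field; auto). rewrite Hn2. field. rewrite <- Hn2; apply Rmult_integral_contrapositive_currified; auto.
  + field. auto.
  + field. auto.
  + replace (- s / n * Jx + r / n * Jy) with (-(r*(-Jy)+s*Jx)/n) by (field; auto). rewrite H2; field; auto.
- destruct (normpos p q (or_intror Hq)) as [Hn Hn2].
  set (n := sqrt (p^2+q^2)) in *. assert (Hn0 : n <> 0) by (intro; lra).
  exists (-q/n), (p/n). repeat split.
  + replace ((-q/n)^2+(p/n)^2) with ((p^2+q^2)/(n*n)) by (field; auto). rewrite Hn2. field. rewrite <- Hn2; apply Rmult_integral_contrapositive_currified; auto.
  + field. auto.
  + replace (r * (- q / n) + s * (p / n)) with ((p*s-q*r)/n) by (field; auto). rewrite Hd; field; auto.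
  + replace (- q / n * Jx + p / n * Jy) with (-(p*(-Jy)+q*Jx)/n) by (field; auto). rewrite H1; field; auto.
- destruct (normpos p q (or_introl Hp)) as [Hn Hn2].
  set (n := sqrt (p^2+q^2)) in *. assert (Hn0 : n <> 0) by (intro; lra).
  exists (-q/n), (p/n). repeat split.
  + replace ((-q/n)^2+(p/n)^2) with ((p^2+q^2)/(n*n)) by (field; auto). rewrite Hn2. field. rewrite <- Hn2; apply Rmult_integral_contrapositive_currified; auto.
  + field. auto.
  + replace (r * (- q / n) + s * (p / n)) with ((p*s-q*r)/n) by (field; auto). rewrite Hd; field; auto.
  + replace (- q / n * Jx + p / n * Jy) with (-(p*(-Jy)+q*Jx)/n) by (field; auto). rewrite H1; field; auto.
Qed.

Lemma rot u1 u2 : u1 <> 0 \/ u2 <> 0 ->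
  exists a b, a^2+b^2 = 1 /\ a*u1 - b*u2 <> 0 /\ b*u1 + a*u2 = 0.
Proof.
intros H. destruct (normpos u1 u2 H) as [Hn Hn2].
set (n := sqrt (u1^2+u2^2)) in *. assert (Hn0 : n <> 0) by (intro; lra).
exists (u1/n), (-u2/n). repeat split.
+ replace ((u1/n)^2+(-u2/n)^2) with ((u1^2+u2^2)/(n*n)) by (field; auto). rewrite Hn2. field. rewrite <- Hn2; apply Rmult_integral_contrapositive_currified; auto.
+ replace (u1 / n * u1 - - u2 / n * u2) with ((u1^2+u2^2)/n) by (field; auto).
  rewrite <- Hn2. replace (n*n/n) with n by (field; auto). auto.
+ field. auto.
Qed.

Definition Eexp (f1 f2 : R -> R -> R) u v al ga :=
    (dx (dx f1) u v * al + dy (dx f1) u v * ga) * dy f2 u v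
    + dx f1 u v * (dx (dy f2) u v * al + dy (dy f2) u v * ga)
    - ((dx (dy f1) u v * al + dy (dy f1) u v * ga) * dx f2 u v
    + dy f1 u v * (dx (dx f2) u v * al + dy (dx f2) u v * ga)).

Lemma Elin f1 f2 u v al ga : Eexp f1 f2 u v al ga = al * Eexp f1 f2 u v 1 0 + ga * Eexp f1 f2 u v 0 1.
Proof. unfold Eexp. ring. Qed.

Lemma JC' f1 f2 (A : Ck2 1 (dx f1)) (B : Ck2 1 (dy f1)) (C : Ck2 1 (dx f2)) (D : Ck2 1 (dy f2))
  (phi psi : R -> R) al ga t0 :
  is_derive phi t0 al -> is_derive psi t0 ga ->
  is_derive (fun t => Jac f1 f2 (phi t) (psi t)) t0 (Eexp f1 f2 (phi t0) (psi t0) al ga).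
Proof. intros; unfold Eexp; apply JC; auto. Qed.

Lemma jac_alg a b c d A B C D : a^2+b^2 = 1 -> c^2+d^2 = 1 ->
  (a*(A*c+B*d) - b*(C*c+D*d)) * (b*(A*(-d)+B*c) + a*(C*(-d)+D*c))
  - (a*(A*(-d)+B*c) - b*(C*(-d)+D*c)) * (b*(A*c+B*d) + a*(C*c+D*d)) = A*D - B*C.
Proof.
intros H1 H2. transitivity ((a^2+b^2)*(c^2+d^2)*(A*D-B*C)); [ring|rewrite H1, H2; ring].
Qed.

Theorem mainTheorem13 (f1 f2 : R -> R -> R) :
  smooth2 f1 -> smooth2 f2 ->
  one_generic f1 f2 ->
  cusp_point f1 f2 0 0 ->
  f1 0 0 = 0 -> f2 0 0 = 0 ->
  rankDf f1 f2 0 0 = 1%nat ->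
  dJ_nonzero f1 f2 0 0 ->
  F1 f1 f2 0 0 = 0 -> F2 f1 f2 0 0 = 0 ->
  exists a b c d : R,
    a ^ 2 + b ^ 2 = 1 /\ c ^ 2 + d ^ 2 = 1 /\
    let g1 := fun x y =>
      a * f1 (c * x - d * y) (d * x + c * y) - b * f2 (c * x - d * y) (d * x + c * y) in
    let g2 := fun x y =>
      b * f1 (c * x - d * y) (d * x + c * y) + a * f2 (c * x - d * y) (d * x + c * y) in
    dx g1 0 0 = 0 /\ dx g2 0 0 = 0 /\ dy g2 0 0 = 0 /\ dy g1 0 0 <> 0 /\
    dx (Jac g1 g2) 0 0 = 0 /\ dy (Jac g1 g2) 0 0 <> 0.
Proof.
intros Sf1 Sf2 _ _ _ _ Hrank HdJ HF1 HF2.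
pose proof (Sf1 1%nat) as C1. pose proof (Sf2 1%nat) as C2.
destruct (Sf1 2%nat) as [_ [_ [CA CB]]].
destruct (Sf2 2%nat) as [_ [_ [CC CD]]].
assert (Hdet : dx f1 0 0 * dy f2 0 0 - dy f1 0 0 * dx f2 0 0 = 0 /\
  ~ (dx f1 0 0 = 0 /\ dy f1 0 0 = 0 /\ dx f2 0 0 = 0 /\ dy f2 0 0 = 0)).
{ unfold rankDf, rank2x2, rank2 in Hrank.
  destruct (Req_EM_T _ 0) as [E|E]; [|discriminate].
  split; auto. intros [E1 [E2 [E3 E4]]].
  rewrite E1, E2, E3, E4 in Hrank.
  repeat (destruct (Req_EM_T 0 0) as [_|N]; [|now apply N]). discriminate. }
destruct Hdet as [Hdet Hnz].
unfold F1 in HF1. unfold F2 in HF2.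
destruct (kern _ _ _ _ _ _ Hdet Hnz HF1 HF2) as [c [d [Hcd [K1 [K2 KJ]]]]].
set (p := dx f1 0 0) in *. set (q := dy f1 0 0) in *.
set (r := dx f2 0 0) in *. set (s := dy f2 0 0) in *.
set (Jx := dx (Jac f1 f2) 0 0) in *. set (Jy := dy (Jac f1 f2) 0 0) in *.
assert (Hu : (-d*p + c*q) <> 0 \/ (-d*r + c*s) <> 0).
{ destruct (Req_dec (-d*p + c*q) 0) as [U1|U1]; [|auto].
  destruct (Req_dec (-d*r + c*s) 0) as [U2|U2]; [|auto].
  exfalso. apply Hnz.
  assert (Ep : p = c*(p*c+q*d) - d*(-d*p+c*q)) by (transitivity (p*(c^2+d^2)); [rewrite Hcd; ring | ring]).
  assert (Eq : q = d*(p*c+q*d) + c*(-d*p+c*q)) by (transitivity (q*(c^2+d^2)); [rewrite Hcd; ring | ring]).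
  assert (Er : r = c*(r*c+s*d) - d*(-d*r+c*s)) by (transitivity (r*(c^2+d^2)); [rewrite Hcd; ring | ring]).
  assert (Es : s = d*(r*c+s*d) + c*(-d*r+c*s)) by (transitivity (s*(c^2+d^2)); [rewrite Hcd; ring | ring]).
  rewrite K1, U1 in Ep, Eq. rewrite K2, U2 in Er, Es.
  repeat split; lra. }
destruct (rot _ _ Hu) as [a [b [Hab [R1 R2]]]].
exists a, b, c, d. split; [exact Hab|split; [exact Hcd|]].
intros g1 g2.
assert (Dg1x : dx g1 0 0 = a*(p*c+q*d) - b*(r*c+s*d)).
{ unfold g1. rewrite (dx_minus f1 f2 a b c d C1 C2).
  replace (c*0-d*0) with 0 by ring. replace (d*0+c*0) with 0 by ring. fold p q r s. ring. }
assert (Dg1y : dy g1 0 0 = a*(-d*p+c*q) - b*(-d*r+c*s)).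
{ unfold g1. rewrite (dy_minus f1 f2 a b c d C1 C2).
  replace (c*0-d*0) with 0 by ring. replace (d*0+c*0) with 0 by ring. fold p q r s. ring. }
assert (Dg2x : dx g2 0 0 = b*(p*c+q*d) + a*(r*c+s*d)).
{ unfold g2. rewrite (dx_plus f1 f2 a b c d C1 C2).
  replace (c*0-d*0) with 0 by ring. replace (d*0+c*0) with 0 by ring. fold p q r s. ring. }
assert (Dg2y : dy g2 0 0 = b*(-d*p+c*q) + a*(-d*r+c*s)).
{ unfold g2. rewrite (dy_plus f1 f2 a b c d C1 C2).
  replace (c*0-d*0) with 0 by ring. replace (d*0+c*0) with 0 by ring. fold p q r s. ring. }
assert (HJ : forall x y, Jac g1 g2 x y = Jac f1 f2 (c*x-d*y) (d*x+c*y)).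
{ intros x y. unfold Jac at 1. unfold g1, g2.
  rewrite (dx_minus f1 f2 a b c d C1 C2), (dy_minus f1 f2 a b c d C1 C2),
    (dx_plus f1 f2 a b c d C1 C2), (dy_plus f1 f2 a b c d C1 C2).
  unfold Jac. apply jac_alg; auto. }
assert (EJx : Jx = Eexp f1 f2 0 0 1 0).
{ unfold Jx, dx at 1. apply is_derive_unique.
  exact (JC' f1 f2 CA CB CC CD (fun t => t) (fun _ => 0) 1 0 0 (is_derive_id _) (is_derive_const _ _)). }
assert (EJy : Jy = Eexp f1 f2 0 0 0 1).
{ unfold Jy, dy at 1. apply is_derive_unique.
  exact (JC' f1 f2 CA CB CC CD (fun _ => 0) (fun t => t) 0 1 0 (is_derive_const _ _) (is_derive_id _)). }
assert (EJ'x : dx (Jac g1 g2) 0 0 = c * Jx + d * Jy).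
{ unfold dx at 1. transitivity (Derive (fun t => Jac f1 f2 (c*t-d*0) (d*t+c*0)) 0).
  { apply Derive_ext; intros; apply HJ. }
  apply is_derive_unique. eapply isd_eq.
  { apply (JC' f1 f2 CA CB CC CD (fun t => c*t-d*0) (fun t => d*t+c*0) c d 0);
    auto_derive; auto; ring. }
  replace (c*0-d*0) with 0 by ring. replace (d*0+c*0) with 0 by ring.
  rewrite Elin, EJx, EJy. reflexivity. }
assert (EJ'y : dy (Jac g1 g2) 0 0 = -d * Jx + c * Jy).
{ unfold dy at 1. transitivity (Derive (fun t => Jac f1 f2 (c*0-d*t) (d*0+c*t)) 0).
  { apply Derive_ext; intros; apply HJ. }
  apply is_derive_unique. eapply isd_eq.
  { apply (JC' f1 f2 CA CB CC CD (fun t => c*0-d*t) (fun t => d*0+c*t) (-d) c 0);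
    auto_derive; auto; ring. }
  replace (c*0-d*0) with 0 by ring. replace (d*0+c*0) with 0 by ring.
  rewrite Elin, EJx, EJy. reflexivity. }
rewrite Dg1x, Dg1y, Dg2x, Dg2y, EJ'x, EJ'y.
rewrite K1, K2.
split; [ring|split; [ring|split; [lra|split; [lra|split; [lra|]]]]].
intro Z.
assert (Hsum : (c*Jx+d*Jy)^2 + (-d*Jx+c*Jy)^2 = Jx^2+Jy^2)
  by (transitivity ((c^2+d^2)*(Jx^2+Jy^2)); [ring|rewrite Hcd; ring]).
rewrite KJ, Z in Hsum.
destruct HdJ as [N|N]; fold Jx Jy in N.
- assert (0 < Jx^2) by (apply pow2_gt_0; auto). pose proof (pow2_ge_0 Jy). lra.
- assert (0 < Jy^2) by (apply pow2_gt_0; auto). pose proof (pow2_ge_0 Jx). lra.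
Qed.
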